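(* Let $p$ be a prime and let $G$ be a finite group with $G=PN$, where $P\in\mathrm{Syl}_p(G)$, $N\trianglelefteq G$ and $\gcd(|P|,|N|)=1$. If $x\in P$, then $|x^G|\leq \nu_p(G)|x^P|$, with equality if and only if $P$ is the unique Sylow $p$-subgroup of $G$ containing $x$.
   Context: $x^G$ (resp. $x^P$) denotes the conjugacy class of $x$ in $G$ (resp. in $P$), $\mathrm{Syl}_p(G)$ the set of Sylow $p$-subgroups of $G$, and $\nu_p(G)=|\mathrm{Syl}_p(G)|$. *)

(* Defs.v *)
From mathcomp Require Import all_boot all_fingroup all_solvable.

(* Main.v *)
Require Import Defs.
From mathcomp Require Import all_boot all_fingroup all_solvable.
Set Implicit Arguments.
Unset Strict Implicit.
Unset Printing Implicit Defensive.

Theorem lemma3p1 (gT : finGroupType) (p : nat) (G P N : {group gT}) (x : gT) :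
  prime p ->
  P \in 'Syl_p(G)%g ->
  (N <| G)%g ->
  (P * N)%g = G ->
  coprime #|P| #|N| ->
  x \in P ->
  (#|(x ^: G)%g| <= #|'Syl_p(G)%g| * #|(x ^: P)%g|)%N /\
  (#|(x ^: G)%g| = #|'Syl_p(G)%g| * #|(x ^: P)%g| :> nat <->
     (forall Q : {group gT}, Q \in 'Syl_p(G)%g -> x \in Q -> Q = P)).
Proof.
Local Open Scope group_scope.
move=> pr_p sylP nNG defG copPN xP.
have sylP' : p.-Sylow(G) P by move: sylP; rewrite inE.
have sPG : P \subset G by case/andP: sylP'.
have nN : G \subset 'N(N) by case/andP: nNG.
have tiPN : P :&: N = 1 := coprime_TIg copPN.
have xG : x \in G by apply: (subsetP sPG).
have clP : (x ^: G) :&: P = x ^: P.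
  apply/setP=> y; apply/idP/idP.
    case/setIP=> /imsetP [g]; rewrite -defG => /mulsgP [a n aP nN' ->] -> yP.
    have zP : x ^ a \in P by rewrite groupJ.
    have zG : x ^ a \in G by apply: (subsetP sPG).
    have e : (x ^ a)^-1 * (x ^ (a * n)) = 1.
      apply/set1gP; rewrite -tiPN; apply/setIP; split.
        by rewrite groupM ?groupV.
      rewrite conjgM /conjg [in X in _ * X]mulgA -/(conjg _ n).
      have -> : (x ^ a)^-1 * (n^-1 * (x ^ a) * n) = (n^-1) ^ (x ^ a) * n.
        by rewrite /conjg !mulgA.
      by rewrite groupM // memJ_norm ?groupV // (subsetP nN).
    have -> : x ^ (a * n) = x ^ a by apply/eqP; rewrite -(can_eq (mulKg (x ^ a)^-1)) e mulVg.
    by apply: imset_f.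
  move=> yP; rewrite inE (subsetP (class_subG xP (subxx P))) // andbT.
  case/imsetP: yP => a aP ->; apply: imset_f; exact: (subsetP sPG).
pose m y := #|[set Q in 'Syl_p(G) | y \in Q]|.
have cnt : forall (T : finType) (A : {set T}) (Pr : pred T),
    \sum_(y in A) (Pr y : nat) = #|[set y in A | Pr y]|.
  move=> T A Pr; rewrite -sum1_card [RHS]big_mkcond [LHS]big_mkcond.
  by apply: eq_bigr => y _; rewrite inE; case: (y \in A); case: (Pr y).
have cQ : forall Q : {group gT}, Q \in 'Syl_p(G) -> #|(x ^: G) :&: Q| = #|x ^: P|.
  move=> Q; rewrite inE => sylQ.
  have [g gG ->] := Sylow_trans sylP' sylQ.
  by rewrite -{1}(classGidr x gG) -conjIg cardJg clP.
have S : \sum_(y in x ^: G) m y = (#|'Syl_p(G)| * #|x ^: P|)%N.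
  rewrite -sum_nat_const.
  transitivity (\sum_(Q in 'Syl_p(G)) \sum_(y in x ^: G) ((y \in Q) : nat)).
    rewrite exchange_big /=; apply: eq_bigr => y _.
    by rewrite /m -cnt.
  apply: eq_bigr => Q sQ; rewrite cnt -(cQ Q sQ); apply: eq_card => y; by rewrite !inE.
have m1 : forall y, y \in x ^: G -> 0 < m y.
  move=> y /imsetP [g gG ->]; apply/card_gt0P; exists (P :^ g)%G.
  by rewrite !inE /= pHallJ // sylP' memJ_conjg xP.
have ineq : #|x ^: G| <= \sum_(y in x ^: G) m y.
  by rewrite -sum1_card; apply: leq_sum => y /m1.
rewrite -S; split => //; split.
  move=> E Q sylQ xQ.
  have E2 : \sum_(y in x ^: G) (m y - 1)%N = 0%N.
    apply/eqP; rewrite -(eqn_add2r #|x ^: G|) add0n {2}E -sum1_card -big_split /=.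
    by apply/eqP; apply: eq_bigr => y /m1 h; rewrite subnK.
  move/eqP: E2; rewrite sum_nat_eq0 => /forallP /(_ x); rewrite class_refl /= subn_eq0.
  move/card_le1_eqP => h; apply: h; by rewrite inE ?sylP ?sylQ.
move=> uniq; rewrite -sum1_card; apply: eq_bigr => y yG.
apply/eqP; rewrite eqn_leq (m1 _ yG) /=.
case/imsetP: yG => g gG ->.
apply/card_le1_eqP => Q1 Q2; rewrite !inE => /andP [s1 y1] /andP [s2 y2].
have key : forall Q : {group gT}, p.-Sylow(G) Q -> x ^ g \in Q -> (Q : {set gT}) = P :^ g.
  move=> Q sQ yQ.
  have E : (Q :^ g^-1)%G = P.
    apply: uniq; first by rewrite inE /= pHallJ // groupV.
    by rewrite /= -(memJ_conjg _ g) conjsgKV.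
  by rewrite -(conjsgKV g Q) -E.
by apply: val_inj; rewrite /= (key _ s1 y1) (key _ s2 y2).
Qed.
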